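(* Let $(\Omega,\mathcal{F})$ be a measurable space, $\mathrm{B}_b$ the space of bounded real-valued measurable functions on $\Omega$, and $C\subset\mathrm{B}_b$ with $0\in C$ and $X+m\in C$ for all $X\in C$, $m\in\mathbb{R}$. Let $H\colon C\to\mathbb{R}$ be a premium principle and define $$R_{\mathrm{Max}}(X):=\inf\{H(X_0)\mid X_0\in C,\ X_0\ge X\},\quad X\in\mathrm{B}_b.$$ Then $R_{\mathrm{Max}}\colon\mathrm{B}_b\to\mathbb{R}$ is a risk measure with $R_{\mathrm{Max}}(X)\le H(X)$ for all $X\in C$; moreover $D_{\mathrm{Min}}(X):=H(X)-R_{\mathrm{Max}}(X)$ defines a deviation measure on $C$, and $H(X)=R_{\mathrm{Max}}(X)+D_{\mathrm{Min}}(X)$ for all $X\in C$. For every other decomposition $H(X)=R(X)+D(X)$, $X\in C$, with a risk measure $R\colon\mathrm{B}_b\to\mathbb{R}$ and a deviation measure $D\colon C\to\mathbb{R}$, one has $R\le R_{\mathrm{Max}}$ (on $\mathrm{B}_b$) and $D\ge D_{\mathrm{Min}}$ (on $C$).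
   Context: Constants are identified with constant functions; $\le$ is the pointwise order. A premium principle is a map $H\colon C\to\mathbb{R}$ with (P1) $H(X+m)=H(X)+m$ for $X\in C$, $m\in\mathbb{R}$, and (P2) $H(0)=0$ and $H(X)\ge0$ for $X\in C$ with $X\ge0$. A risk measure is a map $R\colon\mathrm{B}_b\to\mathbb{R}$ with $R(X+m)=R(X)+m$ for $X\in\mathrm{B}_b$, $m\in\mathbb{R}$, $R(0)=0$, and $R(X)\le R(Y)$ whenever $X\le Y$. A deviation measure is a map $D\colon C\to\mathbb{R}$ with $D(X+m)=D(X)$ for $X\in C$, $m\in\mathbb{R}$, $D(0)=0$, and $D\ge0$ on $C$. *)

(* Defs.v *)
From HB Require Import structures.
From mathcomp Require Import all_boot all_order all_algebra.
From mathcomp Require Import all_classical all_reals.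
From mathcomp Require Import measure_theory.measurable_structure measure_theory.measurable_function.
From mathcomp Require Import lebesgue_measure.
Set Implicit Arguments. Unset Strict Implicit. Unset Printing Implicit Defensive.
Import Order.TTheory GRing.Theory Num.Theory.
Local Open Scope classical_set_scope.
Local Open Scope ring_scope.

Section Defs.
Context (d : measure_display) (T : measurableType d) (R : realType).

Definition Bb : set (T -> R) :=
  [set f : T -> R | measurable_fun setT f /\ exists M : R, forall w, `|f w| <= M].

Definition fle (X Y : T -> R) : Prop := forall w, X w <= Y w.

Definition addc (X : T -> R) (m : R) : T -> R := fun w => X w + m.

Definition zerof : T -> R := fun _ => 0.

Definition admissible_domain (C : set (T -> R)) : Prop :=
  C `<=` Bb /\ C zerof /\ (forall X m, C X -> C (addc X m)).

Definition premium_principle (C : set (T -> R)) (H : (T -> R) -> R) : Prop :=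
  (forall X m, C X -> H (addc X m) = H X + m) /\
  H zerof = 0 /\ (forall X, C X -> fle zerof X -> 0 <= H X).

(* risk measure on B_b (values outside B_b are irrelevant) *)
Definition risk_measure (Rm : (T -> R) -> R) : Prop :=
  (forall X m, Bb X -> Rm (addc X m) = Rm X + m) /\
  Rm zerof = 0 /\
  (forall X Y, Bb X -> Bb Y -> fle X Y -> Rm X <= Rm Y).

Definition deviation_measure (C : set (T -> R)) (D : (T -> R) -> R) : Prop :=
  (forall X m, C X -> D (addc X m) = D X) /\
  D zerof = 0 /\ (forall X, C X -> 0 <= D X).

Definition RMax (C : set (T -> R)) (H : (T -> R) -> R) (X : T -> R) : R :=
  inf [set H X0 | X0 in [set X0 | C X0 /\ fle X X0]].

Definition DMin (C : set (T -> R)) (H : (T -> R) -> R) (X : T -> R) : R :=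
  H X - RMax C H X.

End Defs.

(* Main.v *)
Require Import Defs.
From HB Require Import structures.
From mathcomp Require Import all_boot all_order all_algebra.
From mathcomp Require Import all_classical all_reals.
From mathcomp Require Import measure_theory.measurable_structure measure_theory.measurable_function.
From mathcomp Require Import lebesgue_measure measurable_realfun.
Import Order.TTheory GRing.Theory Num.Theory.
Local Open Scope classical_set_scope.
Local Open Scope ring_scope.

Section Aux.
Context (d : measure_display) (T : measurableType d) (R : realType)
  (C : set (T -> R)) (H : (T -> R) -> R)
  (hC : admissible_domain C) (hH : premium_principle C H).

Let S X := [set H X0 | X0 in [set X0 | C X0 /\ fle X X0]].

Lemma hasinf X : Bb X -> has_inf (S X).
Proof.
case: hC => CB [C0 Cadd]; case: hH => Hadd [H0 Hpos].
move=> [_ [M hM]]; split.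
  exists (H (addc (zerof R) M)), (addc (zerof R) M) => //; split; first exact: Cadd.
  move=> w; rewrite /addc /zerof add0r.
  by apply: le_trans (hM w); exact: ler_norm.
exists (- M) => _ [X0 [CX0 le] <-].
have : 0 <= H (addc X0 M).
  apply: Hpos; first exact: Cadd.
  move=> w; rewrite /zerof /addc.
  have := le w; have := hM w; rewrite ler_norml => /andP[h1 _] h2.
  by rewrite -lerBlDr sub0r; apply: le_trans h1 h2.
by rewrite Hadd // -lerBlDr sub0r.
Qed.

Lemma RMax_lb X X0 : Bb X -> C X0 -> fle X X0 -> RMax C H X <= H X0.
Proof.
move=> bX CX0 le; have [_ hl] := hasinf _ bX.
by apply: ge_inf => //; exists X0.
Qed.

Lemma RMax_ge X x : Bb X -> (forall X0, C X0 -> fle X X0 -> x <= H X0) ->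
  x <= RMax C H X.
Proof.
move=> bX h; have [ne _] := hasinf _ bX.
by apply: lb_le_inf => // _ [X0 [CX0 le] <-]; apply: h.
Qed.

Lemma Bb_add (X : T -> R) m : Bb X -> Bb (addc X m).
Proof.
move=> [mX [M hM]]; split.
  by apply: measurable_funD => //; exact: measurable_cst.
exists (M + `|m|) => w; rewrite /addc.
by apply: le_trans (ler_normD _ _) _; rewrite lerD2r.
Qed.

Lemma RMax_add X m : Bb X -> RMax C H (addc X m) = RMax C H X + m.
Proof.
case: hC => CB [C0 Cadd]; case: hH => Hadd [H0 Hpos].
move=> bX; have bXm := Bb_add _ m bX.
apply/eqP; rewrite eq_le; apply/andP; split.
  rewrite -lerBlDr; apply: RMax_ge => // X0 CX0 le.
  rewrite lerBlDr -Hadd //; apply: RMax_lb => //; first exact: Cadd.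
  by move=> w; rewrite /addc lerD2r.
apply: RMax_ge => // X0 CX0 le; rewrite -lerBrDr.
have -> : X0 = addc (addc X0 (- m)) m.
  by apply: funext => w; rewrite /addc addrNK.
rewrite Hadd ?addrK; last exact: Cadd.
apply: RMax_lb => //; first exact: Cadd.
by move=> w; rewrite /addc lerBrDr; exact: le.
Qed.

End Aux.

Theorem theorem2p3 (d : measure_display) (T : measurableType d) (R : realType)
    (C : set (T -> R)) (H : (T -> R) -> R) :
  admissible_domain C -> premium_principle C H ->
  (forall X, Bb X ->
     has_inf [set H X0 | X0 in [set X0 | C X0 /\ fle X X0]]) /\
  [/\ risk_measure (RMax C H),
      (forall X, C X -> RMax C H X <= H X),
      deviation_measure C (DMin C H),
      (forall X, C X -> H X = RMax C H X + DMin C H X) &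
      (forall (Rm D : (T -> R) -> R),
         risk_measure Rm -> deviation_measure C D ->
         (forall X, C X -> H X = Rm X + D X) ->
         (forall X, Bb X -> Rm X <= RMax C H X) /\
         (forall X, C X -> DMin C H X <= D X))].
Proof.
move=> hC hH.
have [CB [C0 Cadd]] := hC; have [Hadd [H0 Hpos]] := hH.
have B0 : Bb (zerof (T:=T) R) by exact: CB.
have RM0 : RMax C H (zerof R) = 0.
  apply/eqP; rewrite eq_le; apply/andP; split.
    by rewrite -H0; apply: RMax_lb.
  by apply: RMax_ge => // X0 CX0 le; apply: Hpos.
have RMle : forall X, C X -> RMax C H X <= H X.
  move=> X CX; apply: RMax_lb => //.
  exact: CB.
split; first by move=> X; exact: hasinf.
split => //.
- split; first by move=> X m; exact: RMax_add.
  split => // X Y bX bY le.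
  apply: RMax_ge => // X0 CX0 le0; apply: RMax_lb => //.
  by move=> w; apply: le_trans (le w) (le0 w).
- split.
    move=> X m CX; rewrite /DMin Hadd // (@RMax_add _ _ _ _ _ hC hH _ m (CB _ CX)).
    by rewrite opprD addrACA subrr addr0.
  split; first by rewrite /DMin H0 RM0 subrr.
  by move=> X CX; rewrite /DMin subr_ge0; exact: RMle.
- by move=> X CX; rewrite /DMin addrC subrK.
- move=> Rm D [Radd [R0 Rmon]] [Dadd [D0 Dpos]] dec.
  have key : forall X, Bb X -> Rm X <= RMax C H X.
    move=> X bX; apply: RMax_ge => // X0 CX0 le.
    apply: le_trans (Rmon _ _ bX (CB _ CX0) le) _.
    by rewrite (dec _ CX0) lerDl; exact: Dpos.
  split => // X CX; rewrite /DMin (dec _ CX).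
  by rewrite lerBlDr [Rm X + _]addrC lerD2l; apply: key; exact: CB.
Qed.
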